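(* Let $Q$ be a QNP and let $\pi$ be a policy for $Q$. If $\pi$ solves $Q$, then the policy $\pi^*$ defined in the context is a strong cyclic solution of the FOND problem $P=T(Q)$.
   Context: QNPs: $Q=\langle F,V,I,O,G\rangle$ with propositional variables $F$, numerical variables $V$ (non-negative reals), literals $p,\neg p$, $X=0$, $X>0$; actions with precondition $Pre(a)$, propositional effects $\mathit{Eff}(a)$, numerical effects $N(a)\subseteq\{Inc(X),Dec(X)\}$ (at most one per variable; $Dec(X)\in N(a)$ implies $X>0\in Pre(a)$); $a$ decrements $X$ if $Dec(X)\in N(a)$. A state assigns truth values to $F$ and reals $\ge0$ to $V$; initial states satisfy $I$ (closed world); goal states satisfy $G$; for applicable $a$, successors apply propositional effects, strictly increase $X$ for $Inc(X)$, strictly decrease $X$ for $Dec(X)$, rest unchanged. For $\epsilon>0$ an $\epsilon$-trajectory is such a sequence from an initial state where each change of a variable has magnitude $\ge\epsilon$ unless it goes from a value $<\epsilon$ to $0$. The boolean state $\bar s$ is the truth valuation on atoms $p\in F$ and $X=0$; a policy maps states to actions depending only on the boolean state; a maximal $\pi$-trajectory is infinite without goal, ends at its first goal state, or ends where $\pi$ is undefined/inapplicable; $\pi$ solves $Q$ iff for all $\epsilon>0$ all maximal $\epsilon$-$\pi$-trajectories reach a goal state. $T_D(Q)$ is the FOND problem over $F\cup\{p_{X=0}:X\in V\}$ reading $X=0$/$X>0$ as $p_{X=0}$/$\neg p_{X=0}$, replacing $Inc(X)$ by the deterministic effect $\neg p_{X=0}$ and $Dec(X)$ by the nondeterministic effect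 $\neg p_{X=0}\mid p_{X=0}$; its states are the boolean states and $\pi$ acts via $\bar s\mapsto\pi(s)$. $Dec(X)$/$Inc(X)$ actions are those with $Dec(X)$/$Inc(X)$ in $N(a)$. The policy graph $\mathcal G$ has as nodes the states of $T_D(Q)$ reachable from the initial state under $\pi$ and edges $(\bar s,\bar s')$ for $\bar s'$ a possible successor of $\bar s$ under $\pi(\bar s)$. Index the SCCs of $\mathcal G$ as $C_1,C_2,\dots$ so that if $C_i$ reaches $C_j$, $j\ne i$, then $i<j$; $scc(\bar s)$ is the index of the SCC containing $\bar s$. Fix a run of the following (modified) Sieve procedure on $\mathcal G$: repeatedly compute the SCCs of the current graph, choose an SCC $C$ and a variable $X$ such that $\pi(\bar s)$ is a $Dec(X)$ action for some $\bar s\in C$, $\pi(\bar s)$ is an $Inc(X)$ action for no $\bar s\in C$, and $X$ was not chosen in an earlier iteration for a component containing the states of $C$; remove all edges $(\bar s,\bar s')$ with $\bar s,\bar s'\in C$ and $\pi(\bar s)$ a $Dec(X)$ action; stop when no such choice exists. $stack(\bar s)$ is the sequence, in order of iterations, of the variables chosen in iterations whose chosen component contains $\bar s$. The FOND problem $T(Q)$: $n=|F|+|V|$, $Max=1+2^n$. Propositional variables: those of $T_D(Q)$, plus $in(X)$, $depth(d)$ ($0\le d\le|V|$), $index(X,d)$ ($1\le d\le|V|$), and counters $c(d)$ ($0\le d\le|V|$), $c_T$ over $\{0,\dots,Max\}$ encoded in binary; these encode a stack $\alpha$ of distinct variables ($X$ at position $d$ from the bottom iff $index(X,d)$; $|\alpha|=d$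 iff $depth(d)$). Initial state: that of $T_D(Q)$ plus $depth(0)$, counters $0$, other new atoms false; goal $G$. Actions: $Push(X,d)$ ($0\le d<|V|$): pre $\neg in(X),depth(d),c(d)<Max$; eff $in(X),index(X,d+1),depth(d+1),\neg depth(d),c(d):=c(d)+1,c(d+1):=0$. $Pop(X,d)$ ($1\le d\le|V|$): pre $in(X),index(X,d),depth(d)$; eff $\neg in(X),\neg index(X,d),\neg depth(d),depth(d-1)$. $Move$: pre $depth(0),c_T<Max$; eff $c_T:=c_T+1$. For $a\in O$ decrementing no variable: action $a$ with pre $Pre(a)$ plus $\neg in(Y)$ for each $Inc(Y)\in N(a)$, eff $\mathit{Eff}(a)$ plus $Y>0$ for each $Inc(Y)\in N(a)$. For $a$ decrementing some variable, $X$ decremented by $a$, $1\le d\le|V|$: action $a(X,d)$ with pre $Pre(a)$, $\neg in(Y)$ for $Inc(Y)\in N(a)$, $index(X,d)$; eff $\mathit{Eff}(a)$, $Y>0$ for $Inc(Y)\in N(a)$, nondeterministic $Z>0\mid Z=0$ for each $Dec(Z)\in N(a)$, $c(d'):=0$ for $d\le d'\le|V|$. A strong cyclic solution of a FOND problem is a policy such that from every state reachable from the initial state under it some goal state is reachable under it. States of $T(Q)$ are triples $\langle\bar s,c,\alpha\rangle$ (boolean state, counter values, stack). A stack $\alpha=X_1\cdots X_k$ is a prefix of $Z_1\cdots Z_m$ if $k\le m$ and $X_i=Z_i$ for $i\le k$; $\alpha X$ is $\alpha$ with $X$ pushed on top. $\pi^*(\langle\bar s,c,\alpha\rangle)$ is,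 taking the first applicable case: $Pop(X,d)$ if $c_T<scc(\bar s)$, $X$ is the top of $\alpha$ and $d=|\alpha|$; $Move$ if $c_T<scc(\bar s)$ and $\alpha$ is empty; $Pop(X,d)$ if $X$ is the top of $\alpha$, $d=|\alpha|$ and $\alpha$ is not a prefix of $stack(\bar s)$; $Push(X,d)$ if $\alpha X$ is a prefix of $stack(\bar s)$ and $d=|\alpha|$; $a$ if $\pi(\bar s)=a$ decrements no variable; $a(X,d)$ if $\pi(\bar s)=a$ decrements $X$, $X$ is at depth $d$ in $\alpha$, and $a$ decrements no other variable at a depth $d'<d$ in $\alpha$. *)

(* Defs.v *)
From Stdlib Require Import Reals Relations.
From mathcomp Require Import all_boot.

Set Implicit Arguments.
Unset Strict Implicit.
Unset Printing Implicit Defensive.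

Section FOND.
Variables (S A : Type) (init : S) (goal : S -> Prop)
          (app : S -> A -> Prop) (succ : S -> A -> S -> Prop)
          (p : S -> option A).

Definition pstep (s s' : S) : Prop :=
  ~ goal s /\ exists a, p s = Some a /\ app s a /\ succ s a s'.

Definition preach : S -> S -> Prop := clos_refl_trans S pstep.

Definition strong_cyclic : Prop :=
  forall s, preach init s -> exists g, preach s g /\ goal g.
End FOND.

Inductive neff := NoEff | Inc | Dec.

Definition neff_eqb (x y : neff) : bool :=
  match x, y with
  | NoEff, NoEff | Inc, Inc | Dec, Dec => true
  | _, _ => false end.

(* Conditions (sets of literals) are partial assignments:
   for p in F : Some true = p, Some false = ~p, None = not mentioned;
   for X in V : Some true = (X = 0), Some false = (X > 0), None = not mentioned.
   Propositional effects are partial assignments on F.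
   The initial condition I is given, under the closed world assumption,
   as a complete truth valuation of the atoms p in F and X = 0. *)
Record QNP (F V O : finType) := {
  IF : {ffun F -> bool};
  IV : {ffun V -> bool};               (* IV X = true  iff  X = 0 in I *)
  preF : O -> {ffun F -> option bool};
  preV : O -> {ffun V -> option bool};
  effF : O -> {ffun F -> option bool};
  neffs : O -> {ffun V -> neff};       (* at most one numerical effect per var *)
  goalF : {ffun F -> option bool};
  goalV : {ffun V -> option bool};
  dec_pre : forall a X, neffs a X = Dec -> preV a X = Some false
}.

Section QNPSemantics.
Variables (F V O : finType) (Q : QNP F V O).

(* boolean states: valuation of atoms p in F and of atoms X = 0 *)
Definition bstate := ({ffun F -> bool} * {ffun V -> bool})%type.

Definition sat_cond (cF : {ffun F -> option bool}) (cV : {ffun V -> option bool})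
    (b : bstate) : bool :=
  [forall p, if cF p is Some v then b.1 p == v else true] &&
  [forall X, if cV X is Some v then b.2 X == v else true].

Definition applicable (a : O) (b : bstate) : bool :=
  sat_cond (preF Q a) (preV Q a) b.

Definition is_goal (b : bstate) : bool := sat_cond (goalF Q) (goalV Q) b.

Definition initb : bstate := (IF Q, IV Q).

Definition decrements (a : O) (X : V) : bool := neff_eqb (neffs Q a X) Dec.
Definition increments (a : O) (X : V) : bool := neff_eqb (neffs Q a X) Inc.

Record qstate := { qF : {ffun F -> bool}; qV : V -> R }.

Definition valid_qstate (s : qstate) : Prop := forall X, Rle R0 (qV s X).

Definition is_zero (r : R) : bool := if Req_EM_T r R0 then true else false.

Definition bar (s : qstate) : bstate := (qF s, [ffun X => is_zero (qV s X)]).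

Definition q_initial (s : qstate) : Prop := valid_qstate s /\ bar s = initb.

(* s' is a successor of s under a (a is assumed applicable in s) *)
Definition qsucc (a : O) (s s' : qstate) : Prop :=
  valid_qstate s' /\
  (forall p, qF s' p = if effF Q a p is Some v then v else qF s p) /\
  (forall X, match neffs Q a X with
             | Inc => Rlt (qV s X) (qV s' X)
             | Dec => Rlt (qV s' X) (qV s X)
             | NoEff => qV s' X = qV s X end).

Definition eps_change (eps : R) (s s' : qstate) : Prop :=
  forall X, qV s' X <> qV s X ->
    Rle eps (Rabs (Rminus (qV s' X) (qV s X))) \/
    (Rlt (qV s X) eps /\ qV s' X = R0).

Definition qpolicy := bstate -> option O.

Definition pi_eps_step (pi : qpolicy) (eps : R) (s s' : qstate) : Prop :=
  exists a, pi (bar s) = Some a /\ applicable a (bar s) /\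
            qsucc a s s' /\ eps_change eps s s'.

(* pi solves Q iff for every eps > 0, every maximal eps-pi-trajectory
   reaches a goal state: infinite ones, and finite ones ending in a state
   where pi is undefined or inapplicable (maximal finite trajectories
   ending at their first goal state trivially reach the goal). *)
Definition solves (pi : qpolicy) : Prop :=
  forall eps : R, Rlt R0 eps ->
    (forall tr : nat -> qstate,
        q_initial (tr 0) ->
        (forall i, pi_eps_step pi eps (tr i) (tr i.+1)) ->
        exists i, is_goal (bar (tr i))) /\
    (forall (tr : nat -> qstate) (n : nat),
        q_initial (tr 0) ->
        (forall i, i < n -> pi_eps_step pi eps (tr i) (tr i.+1)) ->
        (match pi (bar (tr n)) with
         | None => True
         | Some a => applicable a (bar (tr n)) = false end) ->
        exists2 i, i <= n & is_goal (bar (tr i))).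

Definition td_succ (a : O) (b b' : bstate) : bool :=
  [forall p, b'.1 p == (if effF Q a p is Some v then v else b.1 p)] &&
  [forall X, match neffs Q a X with
             | Inc => b'.2 X == false
             | Dec => true
             | NoEff => b'.2 X == b.2 X end].

Variable pi : qpolicy.

Definition pg_step (b b' : bstate) : bool :=
  ~~ is_goal b &&
  (if pi b is Some a then applicable a b && td_succ a b b' else false).

Definition pg_node (b : bstate) : bool := connect pg_step initb b.

Definition pg_edge (b b' : bstate) : bool := pg_node b && pg_step b b'.

Definition scc_indexing (idx : bstate -> nat) : Prop :=
  exists k : nat,
    (forall b, pg_node b -> 0 < idx b <= k) /\
    (forall i, 0 < i <= k -> exists2 b, pg_node b & idx b = i) /\
    (forall b b', pg_node b -> pg_node b' ->
        (idx b == idx b') = connect pg_edge b b' && connect pg_edge b' b) /\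
    (forall b b', pg_node b -> pg_node b' -> connect pg_edge b b' ->
        idx b != idx b' -> idx b < idx b').

Definition pi_decs (b : bstate) (X : V) : bool :=
  if pi b is Some a then decrements a X else false.
Definition pi_incs (b : bstate) (X : V) : bool :=
  if pi b is Some a then increments a X else false.

Definition remove_edges (E : rel bstate) (ch : {set bstate} * V) : rel bstate :=
  fun u v => E u v && ~~ [&& u \in ch.1, v \in ch.1 & pi_decs u ch.2].

Definition sieve_graph (run : seq ({set bstate} * V)) : rel bstate :=
  foldl remove_edges pg_edge run.

Definition is_scc (E : rel bstate) (C : {set bstate}) : Prop :=
  exists2 u, pg_node u &
    C = [set v | pg_node v && connect E u v && connect E v u].

Definition sieve_choice (prev : seq ({set bstate} * V))
    (C : {set bstate}) (X : V) : Prop :=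
  is_scc (sieve_graph prev) C /\
  (exists2 b, b \in C & pi_decs b X) /\
  (forall b, b \in C -> ~~ pi_incs b X) /\
  ~ (exists C', (C', X) \in prev /\ C \subset C').

Definition sieve_run (run : seq ({set bstate} * V)) : Prop :=
  (forall t (C : {set bstate}) (X : V), t < size run ->
      nth (C, X) run t = (C, X) -> sieve_choice (take t run) C X) /\
  ~ (exists C X, sieve_choice run C X).

Definition stack (run : seq ({set bstate} * V)) (b : bstate) : seq V :=
  map snd (filter (fun ch : {set bstate} * V => b \in ch.1) run).

Definition nvars : nat := #|V|.
Definition Max : nat := 1 + 2 ^ (#|F| + #|V|).

(* states <bar s, c, alpha>; the stack alpha is listed bottom first, so
   X is at position d from the bottom iff nth alpha (d-1) = X *)
Record tstate := {
  tb : bstate;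
  tc : nat -> nat;     (* counters c(d), 0 <= d <= |V| *)
  tcT : nat;
  tal : seq V
}.

Inductive tact :=
| Push of V & nat
| Pop of V & nat
| Move
| Act of O            (* for a decrementing no variable *)
| ActD of O & V & nat .

Definition at_pos (al : seq V) (X : V) (d : nat) : bool :=
  (0 < d) && (d <= size al) && (nth X al d.-1 == X).

Definition t_init : tstate :=
  {| tb := initb; tc := fun _ => 0; tcT := 0; tal := [::] |}.

Definition t_goal (s : tstate) : Prop := is_goal (tb s).

Definition no_inc_in_stack (a : O) (al : seq V) : bool :=
  [forall Y, increments a Y ==> (Y \notin al)].

Definition t_app (s : tstate) (act : tact) : Prop :=
  match act with
  | Push X d => [/\ d < nvars, X \notin tal s, size (tal s) = d & tc s d < Max]
  | Pop X d => [/\ 1 <= d <= nvars, X \in tal s, at_pos (tal s) X d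
                 & size (tal s) = d]
  | Move => size (tal s) = 0 /\ tcT s < Max
  | Act a => [/\ forall Z, ~~ decrements a Z, applicable a (tb s)
               & no_inc_in_stack a (tal s)]
  | ActD a X d => [/\ decrements a X, 1 <= d <= nvars, applicable a (tb s),
                    no_inc_in_stack a (tal s) & at_pos (tal s) X d]
  end.

Definition t_succ (s : tstate) (act : tact) (s' : tstate) : Prop :=
  match act with
  | Push X d => [/\ tb s' = tb s, tcT s' = tcT s,
                   tal s' = rcons (tal s) X
                 & forall i, tc s' i = if i == d then (tc s d).+1
                                       else if i == d.+1 then 0 else tc s i]
  | Pop X d => [/\ tb s' = tb s, tcT s' = tcT s,
                  tal s' = take d.-1 (tal s) & forall i, tc s' i = tc s i]
  | Move => [/\ tb s' = tb s, tcT s' = (tcT s).+1,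
               tal s' = tal s & forall i, tc s' i = tc s i]
  | Act a => [/\ td_succ a (tb s) (tb s'), tcT s' = tcT s,
                tal s' = tal s & forall i, tc s' i = tc s i]
  | ActD a X d => [/\ td_succ a (tb s) (tb s'), tcT s' = tcT s,
                     tal s' = tal s
                   & forall i, tc s' i = if d <= i <= nvars then 0 else tc s i]
  end.

Definition is_prefix (al st : seq V) : bool := al == take (size al) st.

Definition pistar (idx : bstate -> nat) (run : seq ({set bstate} * V))
    (s : tstate) : option tact :=
  let b := tb s in
  let al := tal s in
  let st := stack run b in
  if tcT s < idx b then
    (if rev al is X :: _ then Some (Pop X (size al)) else Some Move)
  else if ~~ is_prefix al st then
    (if rev al is X :: _ then Some (Pop X (size al)) else None)
  else if drop (size al) st is X :: _ then Some (Push X (size al))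
  else match pi b with
       | None => None
       | Some a =>
         if [forall Z, ~~ decrements a Z] then Some (Act a)
         else if [seq Z <- al | decrements a Z] is X :: _
              then Some (ActD a X (index X al).+1)
              else None
       end.

End QNPSemantics.

(* Main.v *)
Require Import Defs.
From Stdlib Require Import Reals Relations Lra Classical.
From mathcomp Require Import all_boot.
From mathcomp Require Import zify.

Set Implicit Arguments.
Unset Strict Implicit.
Unset Printing Implicit Defensive.

Section Real.
Variables (F V O : finType) (Q : QNP F V O) (pi : qpolicy F V O).
Local Notation bst := (bstate F V).

Definition stay_dec (bs : nat -> bst) i X :=
  (if pi (bs i) is Some a then decrements Q a X else false) && ~~ (bs i.+1).2 X.
Definition inc_step (bs : nat -> bst) j X :=
  if pi (bs j) is Some a then increments Q a X else false.

Fixpoint val (bs : nat -> bst) (B : nat) (i : nat) (X : V) : nat :=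
  match i with
  | 0 => if (initb Q).2 X then 0 else B
  | i'.+1 => match pi (bs i') with
             | None => val bs B i' X
             | Some a => match neffs Q a X with
                         | Inc => val bs B i' X + B
                         | Dec => if (bs i'.+1).2 X then 0 else (val bs B i' X).-1
                         | NoEff => val bs B i' X end end
  end.

Lemma valW bs B X j i : j <= i ->
  val bs B i X = 0 \/ minn (val bs B j X) B <= val bs B i X + (i - j).
Proof.
elim: i => [|i IH] hj.
  by right; move: hj; rewrite leqn0 => /eqP ->; lia.
move: hj; rewrite leq_eqVlt => /orP [/eqP <-|hj].
  by right; lia.
have {IH} [h|h] := IH hj.
  simpl; case: (pi (bs i)) => [a|]; last by left.
  case: (neffs Q a X).
  - by left.
  - by right; lia.
  - by case: ((bs i.+1).2 X); left => //; rewrite h.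
simpl; case: (pi (bs i)) => [a|]; last by right; rewrite subSn //; lia.
case: (neffs Q a X).
- by right; rewrite subSn //; lia.
- right; lia.
- case: ((bs i.+1).2 X); first by left.
  case E: (val bs B i X) => [|v]; first by left.
  right; rewrite E in h; simpl; rewrite subSn //; lia.
Qed.


Lemma decE a X : decrements Q a X = (if neffs Q a X is Dec then true else false).
Proof. by rewrite /decrements; case: (neffs Q a X). Qed.
Lemma incE a X : increments Q a X = (if neffs Q a X is Inc then true else false).
Proof. by rewrite /increments; case: (neffs Q a X). Qed.

Lemma pg_stepP b b' : pg_step Q pi b b' ->
  ~~ is_goal Q b /\ exists a, [/\ pi b = Some a, applicable Q a b & td_succ Q a b b'].
Proof.
rewrite /pg_step => /andP [hg]; case: (pi b) => [a|] // /andP [h1 h2].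
by split => //; exists a.
Qed.

Lemma app_dec a b X : applicable Q a b -> neffs Q a X = Dec -> b.2 X = false.
Proof.
move=> + hd; rewrite /applicable /sat_cond => /andP [_ /forallP /(_ X)].
by rewrite (dec_pre hd) => /eqP.
Qed.

Lemma td_V a b b' X : td_succ Q a b b' ->
  match neffs Q a X with Inc => b'.2 X = false | Dec => True
  | NoEff => b'.2 X = b.2 X end.
Proof.
rewrite /td_succ => /andP [_ /forallP /(_ X)].
by case: (neffs Q a X) => // /eqP.
Qed.

Lemma td_F a b b' p : td_succ Q a b b' ->
  b'.1 p = if effF Q a p is Some v then v else b.1 p.
Proof. by rewrite /td_succ => /andP [/forallP /(_ p) /eqP]. Qed.

Lemma bool_pos bs i X : (forall k, k < i -> pg_step Q pi (bs k) (bs k.+1)) ->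
  (bs i).2 X = false -> (bs 0).2 X = false \/ exists2 j, j < i & inc_step bs j X.
Proof.
elim: i => [|i IH] hs hi; first by left.
have [_ [a [ea ap td]]] := pg_stepP (hs i (ltnSn i)).
have hs' : forall k, k < i -> pg_step Q pi (bs k) (bs k.+1).
  by move=> k hk; apply: hs; apply: ltnW.
have lift : (bs 0).2 X = false \/ (exists2 j, j < i & inc_step bs j X) ->
   (bs 0).2 X = false \/ (exists2 j, j < i.+1 & inc_step bs j X).
  by case=> [->|[j hj hj']]; [left|right; exists j => //; apply: ltnW].
have := td_V X td; case E: (neffs Q a X) => [||] h.
- by apply: lift; apply: IH => //; rewrite -h.
- by right; exists i => //; rewrite /inc_step ea incE E.
- by apply: lift; apply: IH => //; exact: (app_dec ap E).
Qed.

Lemma val_inc bs B j X : inc_step bs j X -> B <= val bs B j.+1 X.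
Proof.
rewrite /inc_step /=; case: (pi (bs j)) => // a; rewrite incE.
by case: (neffs Q a X) => // _; apply: leq_addl.
Qed.

Definition slack_hyp (bs : nat -> bst) n N :=
  forall i X, N <= i -> i < n -> stay_dec bs i X ->
    exists j, [/\ j < i, i <= j + N & inc_step bs j X].

Lemma val_cons bs n N : bs 0 = initb Q ->
  (forall k, k < n -> pg_step Q pi (bs k) (bs k.+1)) ->
  slack_hyp bs n N ->
  forall i, i <= n -> forall X, (bs i).2 X = (val bs N.+2 i X == 0).
Proof.
move=> h0 hs hsl; elim=> [|i IH] hi X.
  by rewrite h0 /=; case: ((initb Q).2 X).
have hin : i < n by [].
have [_ [a [ea ap td]]] := pg_stepP (hs i hin).
have IH' := IH (ltnW hi) X.
rewrite /= ea; have := td_V X td; case E: (neffs Q a X) => [||] h.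
- by rewrite h.
- by rewrite h addn_eq0 andbF.
- case H: ((bs i.+1).2 X) => //.
  have p0 : (bs i).2 X = false := app_dec ap E.
  have nz : val bs N.+2 i X != 0 by rewrite -IH' p0.
  have [j [hj1 hj2 hj3]] : exists j, [/\ j <= i, i - j <= N & N.+2 <= val bs N.+2 j X].
    case: (leqP N i) => hNi.
      have [|j0 [h1 h2 h3]] := hsl i X hNi hin.
        by rewrite /stay_dec ea decE E H.
      exists j0.+1; split => //; first by lia.
      exact: val_inc.
    have hs' : forall k, k < i -> pg_step Q pi (bs k) (bs k.+1).
      by move=> k hk; apply: hs; lia.
    have [hh|[j0 h1 h2]] := bool_pos hs' p0.
      exists 0; split => //; first by lia.
      by move: hh; rewrite h0 /= => ->.
    exists j0.+1; split => //; first by lia.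
    exact: val_inc.
  have [hv|hv] := valW bs N.+2 X hj1.
    by move: nz; rewrite hv.
  move: hv nz; rewrite (minn_idPr hj3) => hv nz.
  apply/esym/eqP; lia.
Qed.

Definition traj (bs : nat -> bst) B i : qstate F V :=
  Build_qstate (bs i).1 (fun X => INR (val bs B i X)).

Lemma is_zero_INR v : is_zero (INR v) = (v == 0).
Proof.
rewrite /is_zero; case: Req_EM_T => h.
  by apply/esym/eqP; apply: INR_eq; rewrite h.
by apply/esym/eqP => hv; apply: h; rewrite hv.
Qed.

Lemma bar_traj (bs : nat -> bst) B i : (forall X, (bs i).2 X = (val bs B i X == 0)) ->
  bar (traj bs B i) = bs i.
Proof.
rewrite /bar /traj /=; case: (bs i) => f g /= H; congr pair.
by apply/ffunP => X; rewrite ffunE is_zero_INR -H.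
Qed.

Lemma INR_neq u v : u <> v -> Rle 1 (Rabs (Rminus (INR u) (INR v))).
Proof.
have key : forall u v, u < v -> Rle 1 (Rabs (Rminus (INR u) (INR v))).
  move=> {}u {}v h.
  have -> : v = u + (v - u) by rewrite subnKC // ltnW.
  have hw : Rle 1 (INR (v - u)).
    by apply: (le_INR 1); apply/leP; rewrite subn_gt0.
  rewrite plus_INR Rabs_minus_sym Rabs_pos_eq; lra.
move=> h; case: (ltngtP u v) => huv.
- exact: key.
- by rewrite Rabs_minus_sym; apply: key.
- by move: h; rewrite huv.
Qed.

Lemma traj_step (bs : nat -> bst) B i : 0 < B ->
  (forall X, (bs i).2 X = (val bs B i X == 0)) ->
  (forall X, (bs i.+1).2 X = (val bs B i.+1 X == 0)) ->
  pg_step Q pi (bs i) (bs i.+1) ->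
  pi_eps_step Q pi 1 (traj bs B i) (traj bs B i.+1).
Proof.
move=> hB h1 h2 hs; have [_ [a [ea ap td]]] := pg_stepP hs.
exists a; rewrite bar_traj //; split; first exact: ea.
split; first exact: ap.
split; last first.
  move=> X /= hne; left; apply: INR_neq => hv; apply: hne; by rewrite hv.
split; first by move=> X; apply: pos_INR.
split; first by move=> p /=; apply: (td_F p td).
move=> X /=; rewrite ea.
case E: (neffs Q a X) => [||].
- by [].
- by apply: lt_INR; apply/ltP; rewrite -{1}(addn0 (val bs B i X)) ltn_add2l.
- have p0 : (bs i).2 X = false := app_dec ap E.
  have nz : val bs B i X != 0 by rewrite -h1 p0.
  apply: lt_INR; apply/ltP.
  by case: ((bs i.+1).2 X); rewrite ?lt0n //; move: nz; case: (val bs B i X).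
Qed.

Lemma not_solves_inf (bs : nat -> bst) N : bs 0 = initb Q ->
  (forall k, pg_step Q pi (bs k) (bs k.+1)) ->
  (forall i X, N <= i -> stay_dec bs i X ->
     exists j, [/\ j < i, i <= j + N & inc_step bs j X]) ->
  ~ solves Q pi.
Proof.
move=> h0 hs hsl hsol; have [c1 _] := hsol R1 Rlt_0_1.
have hcons : forall i X, (bs i).2 X = (val bs N.+2 i X == 0).
  move=> i; apply: (@val_cons bs i N) => //.
  by move=> i' X h1 h2 h3; apply: hsl.
have q0 : q_initial Q (traj bs N.+2 0).
  split; first by move=> X; apply: pos_INR.
  by rewrite bar_traj // -h0.
have hst : forall i, pi_eps_step Q pi 1 (traj bs N.+2 i) (traj bs N.+2 i.+1).
  by move=> i; apply: traj_step.
have [i hi] := c1 (traj bs N.+2) q0 hst.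
move: hi; rewrite bar_traj //.
by have [hg _] := pg_stepP (hs i); rewrite (negbTE hg).
Qed.

Lemma not_solves_fin (bs : nat -> bst) n : bs 0 = initb Q ->
  (forall k, k < n -> pg_step Q pi (bs k) (bs k.+1)) ->
  ~~ is_goal Q (bs n) ->
  (match pi (bs n) with None => True | Some a => applicable Q a (bs n) = false end) ->
  ~ solves Q pi.
Proof.
move=> h0 hs hgn hend0 hsol; have [_ c2] := hsol R1 Rlt_0_1.
have hcons : forall i, i <= n -> forall X, (bs i).2 X = (val bs n.+2 i X == 0).
  apply: (@val_cons bs n n) => //.
  by move=> i X h1 h2; lia.
have q0 : q_initial Q (traj bs n.+2 0).
  split; first by move=> X; apply: pos_INR.
  by rewrite bar_traj; [exact: h0 | exact: (hcons 0 (leq0n n))].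
have hst : forall i, i < n -> pi_eps_step Q pi 1 (traj bs n.+2 i) (traj bs n.+2 i.+1).
  move=> i hi; apply: traj_step => //; [exact: (hcons i (ltnW hi))|exact: (hcons i.+1 hi)|exact: hs].
have e : bar (traj bs n.+2 n) = bs n := bar_traj (hcons n (leqnn n)).
have [i hi hg] := c2 (traj bs n.+2) n q0 hst (eq_ind_r (fun b =>
  match pi b with None => True | Some a => applicable Q a b = false end) hend0 e).
move: hg; rewrite bar_traj; last by apply: hcons.
move: hi; rewrite leq_eqVlt => /orP [/eqP ->|hi]; first by rewrite (negbTE hgn).
by have [hg _] := pg_stepP (hs i hi); rewrite (negbTE hg).
Qed.

End Real.

Section GraphA.
Variables (F V O : finType) (Q : QNP F V O) (pi : qpolicy F V O).
Local Notation bst := (bstate F V).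
Hypothesis hsol : solves Q pi.

Lemma path_bs (b : bst) p : path (pg_step Q pi) (initb Q) p -> b = last (initb Q) p ->
  let bs := fun i => nth b (initb Q :: p) i in
  [/\ bs 0 = initb Q, forall k, k < size p -> pg_step Q pi (bs k) (bs k.+1)
    & bs (size p) = b].
Proof.
move=> hp hb bs; split => //.
  by move=> k hk; move/(pathP b): hp => /(_ k hk).
by rewrite /bs hb -[size p]/((size (initb Q :: p)).-1) nth_last.
Qed.

Lemma A1 b : pg_node Q pi b -> ~~ is_goal Q b ->
  exists a, pi b = Some a /\ applicable Q a b.
Proof.
move=> hn hg; apply: NNPP => hno.
move/connectP: hn => [p hp hb].
have [h0 hs hn] := path_bs hp hb.
apply: (not_solves_fin (bs := fun i => nth b (initb Q :: p) i) (n := size p) h0 hs) => //.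
  by rewrite hn.
rewrite hn; case E: (pi b) => [a|] //.
by apply/negbTE/negP => ha; apply: hno; exists a.
Qed.

Definition fsucc (u : bst) : bst :=
  if pi u is Some a then
    ([ffun p => if effF Q a p is Some v then v else u.1 p],
     [ffun X => match neffs Q a X with Inc => false | Dec => true | NoEff => u.2 X end])
  else u.

Lemma fsucc_td u a : pi u = Some a -> td_succ Q a u (fsucc u).
Proof.
move=> e; rewrite /fsucc e /td_succ; apply/andP; split; apply/forallP => x /=.
  by rewrite ffunE.
by rewrite ffunE; case: (neffs Q a x).
Qed.

Lemma A2 b : pg_node Q pi b -> exists g, connect (pg_step Q pi) b g /\ is_goal Q g.
Proof.
move=> hn; apply: NNPP => hno.
have ng : forall g, connect (pg_step Q pi) b g -> ~~ is_goal Q g.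
  by move=> g hg; apply/negP => gg; apply: hno; exists g.
have stp : forall u, connect (pg_step Q pi) b u -> pg_step Q pi u (fsucc u).
  move=> u hu; have nu : pg_node Q pi u by apply: connect_trans hn hu.
  have [a [ea ap]] := A1 nu (ng u hu).
  by rewrite /pg_step (ng u hu) ea ap /= fsucc_td.
have reach : forall j, connect (pg_step Q pi) b (iter j fsucc b).
  elim=> [|j IH] /=; first exact: connect0.
  exact: (connect_trans IH (connect1 (stp _ IH))).
move: (hn) => /connectP [p hp hb].
have [h0 hs he] := path_bs hp hb.
set m := size p in hs he.
pose bs i := if i <= m then nth b (initb Q :: p) i else iter (i - m) fsucc b.
have bsE : forall k, m <= k -> bs k = iter (k - m) fsucc b.
  move=> k hk; rewrite /bs; case: (leqP k m) => // hkm.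
  have -> : k = m by apply/eqP; rewrite eqn_leq hkm hk.
  by rewrite subnn /= he.
apply: (@not_solves_inf F V O Q pi bs m).
- by rewrite /bs leq0n.
- move=> k; case: (ltnP k m) => hk.
    by rewrite /bs ltnW // hk; apply: hs.
  rewrite bsE // bsE; last exact: leqW.
  by rewrite subSn //=; apply: stp; apply: reach.
- move=> i X hi; rewrite /stay_dec (bsE _ (leqW hi)) (bsE _ hi) subSn //=.
  have hr := reach (i - m).
  rewrite /fsucc; case E: (pi _) => [a|] //.
  by rewrite ffunE decE; case: (neffs Q a X).
exact: hsol.
Qed.

End GraphA.

Section Sieve.
Variables (F V O : finType) (Q : QNP F V O) (pi : qpolicy F V O).
Variable run : seq ({set bstate F V} * V).
Local Notation bst := (bstate F V).
Hypothesis hrun : sieve_run Q pi run.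

Local Notation E s := (sieve_graph Q pi s).

Lemma foldl_sub (e : rel bst) s u v : foldl (remove_edges Q pi) e s u v -> e u v.
Proof.
elim: s e => [|c s IH] e //= h; move: (IH _ h).
by rewrite /remove_edges => /andP [].
Qed.

Lemma sieve_cat s s' u v : E (s ++ s') u v -> E s u v.
Proof. by rewrite /sieve_graph foldl_cat => /foldl_sub. Qed.

Lemma sieve_take t t' u v : t <= t' -> E (take t' run) u v -> E (take t run) u v.
Proof.
move=> h; rewrite -(subnKC h) takeD => /sieve_cat.
exact.
Qed.

Lemma sieve_pg s u v : E s u v -> pg_edge Q pi u v.
Proof. exact: foldl_sub. Qed.

Lemma sieve_run_full u v : E run u v -> E (take 0 run) u v.
Proof. by rewrite -{1}(cat_take_drop 0 run) => /sieve_cat. Qed.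

Lemma choice_at t0 c : t0 < size run -> nth c run t0 = c ->
  sieve_choice Q pi (take t0 run) c.1 c.2.
Proof.
case: c => C X ht hn; apply: (hrun.1 t0 C X ht hn).
Qed.

Lemma in_take_run c t : c \in take t run ->
  exists t0, [/\ t0 < t, t0 < size run, nth c run t0 = c
               & sieve_choice Q pi (take t0 run) c.1 c.2].
Proof.
move=> hc; exists (index c (take t run)).
have hi := hc; rewrite -index_mem size_take in hi.
have [h1 h2] : index c (take t run) < t /\ index c (take t run) < size run.
  move: hi; case: ifP => h h'.
    by split => //; apply: ltn_trans h' h.
  by split; [apply: leq_trans h' _; rewrite leqNgt h|].
have h3 : nth c run (index c (take t run)) = c by rewrite -(nth_take _ h1) nth_index.
by split => //; apply: choice_at.
Qed.

Lemma in_run c : c \in run ->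
  exists t0, [/\ t0 < size run, nth c run t0 = c
               & sieve_choice Q pi (take t0 run) c.1 c.2].
Proof.
rewrite -{1}(take_size run) => /in_take_run [t0 [_ h1 h2 h3]].
by exists t0.
Qed.

Lemma scc_nest (E1 E2 : rel bst) C1 C2 b :
  is_scc Q pi E1 C1 -> is_scc Q pi E2 C2 -> (forall u v, E2 u v -> E1 u v) ->
  b \in C1 -> b \in C2 -> C2 \subset C1.
Proof.
move=> [u1 _ ->] [u2 _ ->] hsub; rewrite !inE => /andP [/andP [_ a1] a2] /andP [/andP [_ b1] b2].
apply/subsetP => v; rewrite !inE => /andP [/andP [nv c1] c2].
have s : forall x y, connect E2 x y -> connect E1 x y.
  by apply: connect_sub => x y h; apply: connect1; apply: hsub.
rewrite nv /=; apply/andP; split.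
  exact: (connect_trans a1 (s _ _ (connect_trans b2 c1))).
exact: (connect_trans (s _ _ (connect_trans c2 b1)) a2).
Qed.

Lemma stack_mem (s : seq ({set bst} * V)) (b : bst) X : X \in stack s b -> exists C, (C, X) \in s /\ b \in C.
Proof.
rewrite /stack => /mapP [[C Y]]; rewrite mem_filter /= => /andP [hb hc] ->.
by exists C.
Qed.

Lemma mem_stack (s : seq ({set bst} * V)) (b : bst) C X : (C, X) \in s -> b \in C -> X \in stack s b.
Proof.
move=> hc hb; apply/mapP; exists (C, X) => //; by rewrite mem_filter hb.
Qed.

Lemma stack_rcons (s : seq ({set bst} * V)) c (b : bst) : stack (rcons s c) b =
  stack s b ++ (if b \in c.1 then [:: c.2] else [::]).
Proof.
rewrite /stack filter_rcons; case: (b \in c.1) => /=.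
  by rewrite map_rcons cats1.
by rewrite cats0.
Qed.

Lemma take_step t : t < size run ->
  exists c, take t.+1 run = rcons (take t run) c /\ sieve_choice Q pi (take t run) c.1 c.2.
Proof.
move=> ht; have : run != [::] by case: run ht.
case E0: run => [|d r] // _.
exists (nth d run t); split; first by rewrite -E0 (take_nth d).
rewrite -E0; apply: choice_at => //; exact: set_nth_default.
Qed.

Lemma stack_uniq (b : bst) : uniq (stack run b).
Proof.
suff: forall t, t <= size run -> uniq (stack (take t run) b).
  by move/(_ (size run) (leqnn _)); rewrite take_size.
elim=> [|t IH] ht; first by rewrite take0.
have [[C X] [e [hscc [_ [_ hnot]]]]] := take_step ht.
have IH' := IH (ltnW ht).
rewrite e stack_rcons; case: ifP => hb; last by rewrite cats0.
rewrite cat_uniq IH' /= andbT orbF.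
apply/negP => /stack_mem [C' [hc' hb']].
apply: hnot; exists C'; split => //.
have [t0 [h1 h2 h3 [hscc' _]]] := in_take_run hc'.
apply: (scc_nest hscc' hscc _ hb' hb) => u v.
by apply: sieve_take; apply: ltnW.
Qed.


Lemma scc_node (E1 : rel bst) C u : is_scc Q pi E1 C -> u \in C -> pg_node Q pi u.
Proof. by move=> [u0 _ ->]; rewrite inE => /andP [/andP []]. Qed.

Lemma inc_not_stack b Y : pi_incs Q pi b Y -> Y \notin stack run b.
Proof.
move=> hi; apply/negP => /stack_mem [C [hc hb]].
have [t0 [_ _ [_ [_ [hall _]]]]] := in_run hc.
by move: (hall b hb); rewrite hi.
Qed.

Lemma E_rcons s c u v : E (rcons s c) u v =
  E s u v && ~~ [&& u \in c.1, v \in c.1 & pi_decs Q pi u c.2].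
Proof. by rewrite /sieve_graph foldl_rcons. Qed.

Lemma removed C Y u v : (C, Y) \in run -> u \in C -> v \in C ->
  pi_decs Q pi u Y -> ~~ E run u v.
Proof.
move=> hc hu hv hd; have [t0 [ht hn _]] := in_run hc.
apply/negP => he.
have : E (take t0.+1 run) u v.
  by apply: (@sieve_take _ (size run)) => //; rewrite take_size.
by rewrite (take_nth (C, Y) ht) hn E_rcons /= hu hv hd andbF.
Qed.

Definition fscc (u : bst) : {set bst} :=
  [set v | pg_node Q pi v && connect (E run) u v && connect (E run) v u].

Lemma fscc_scc u : pg_node Q pi u -> is_scc Q pi (E run) (fscc u).
Proof. by move=> hu; exists u. Qed.

Lemma fscc_self u : pg_node Q pi u -> u \in fscc u.
Proof. by move=> hu; rewrite inE hu connect0. Qed.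

Lemma final_nest C Y u : (C, Y) \in run -> u \in C -> fscc u \subset C.
Proof.
move=> hc hu; have [t0 [ht hn [hscc _]]] := in_run hc.
have nu := scc_node hscc hu.
apply: (scc_nest hscc (fscc_scc nu) _ hu (fscc_self nu)) => x y h.
by apply: (sieve_take (t' := size run)); [apply: ltnW|rewrite take_size].
Qed.

Lemma stack_cat (s1 s2 : seq ({set bst} * V)) (b : bst) :
  stack (s1 ++ s2) b = stack s1 b ++ stack s2 b.
Proof. by rewrite /stack filter_cat map_cat. Qed.

Lemma take_small (s s' : seq V) d : take d.+1 s = take d.+1 s' -> size s <= d -> s' = s.
Proof.
move=> e hs; have e1 : take d.+1 s = s by rewrite take_oversize // ltnW.
case: (leqP (size s') d) => hs'.
  by rewrite -e1 e take_oversize // ltnW.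
have : size (take d.+1 s') = size s by rewrite -e e1.
rewrite size_takel // => h; move: hs; rewrite -h ltnn //.
Qed.

Definition Kd d (x y : bst) : bool :=
  pg_edge Q pi x y && all (fun Z => ~~ pi_decs Q pi x Z) (take d (stack run x)).

Lemma Kd_pg d x y : Kd d x y -> pg_edge Q pi x y.
Proof. by case/andP. Qed.

Lemma pg_edge_node x y : pg_edge Q pi x y -> pg_node Q pi x /\ pg_node Q pi y.
Proof.
case/andP => hx hs; split => //; apply: connect_trans hx _; exact: connect1.
Qed.

Lemma path_ind_K d (P : bst -> bst -> Prop) :
  (forall x y, Kd d x y -> connect (Kd d) y x -> P x y) ->
  (forall x y z, P x y -> P y z -> P x z) -> (forall x, P x x) ->
  forall x y, connect (Kd d) x y -> connect (Kd d) y x -> P x y.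
Proof.
move=> hstep htr hrefl x y /connectP [p hp ->]; elim: p x hp => [|z p IH] x //=.
case/andP => hxz hp hback.
apply: (htr _ z); first apply: hstep => //.
  apply: (connect_trans _ hback); apply/connectP; by exists p.
apply: IH => //; apply: (connect_trans hback); exact: connect1.
Qed.

Lemma cycle_stack d x y : connect (Kd d) x y -> connect (Kd d) y x ->
  take d.+1 (stack run x) = take d.+1 (stack run y).
Proof.
pose st t b := stack (take t run) b.
suff claim : forall t, t <= size run -> forall x y, Kd d x y -> connect (Kd d) y x ->
    take d.+1 (st t x) = take d.+1 (st t y) /\ (size (st t x) <= d -> E (take t run) x y).
  have := path_ind_K (P := fun x y => take d.+1 (st (size run) x) = take d.+1 (st (size run) y)).
  rewrite /st take_size; apply.
  - by move=> x' y' h1 h2; have := claim _ (leqnn _) _ _ h1 h2; rewrite /st take_size; case.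
  - by move=> ? ? ? -> ->.
  - by [].
elim=> [|t IH] ht x' y' hk hb.
  rewrite /st take0; split => // _; exact: (Kd_pg hk).
have [[C X] [e [hscc _]]] := take_step ht.
have IHt := IH (ltnW ht).
have der : forall x y, connect (Kd d) x y -> connect (Kd d) y x ->
    take d.+1 (st t x) = take d.+1 (st t y).
  apply: (path_ind_K (P := fun x y => take d.+1 (st t x) = take d.+1 (st t y))).
  - by move=> ? ? h1 h2; case: (IHt _ _ h1 h2).
  - by move=> ? ? ? -> ->.
  - by [].
have der2 : forall x y, connect (Kd d) x y -> connect (Kd d) y x ->
    size (st t x) <= d -> connect (E (take t run)) x y /\ size (st t y) <= d.
  apply: (path_ind_K (P := fun x y => size (st t x) <= d ->
                        connect (E (take t run)) x y /\ size (st t y) <= d)).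
  - move=> a b h1 h2 hs; have [eq1 hE1] := IHt _ _ h1 h2.
    split; first by apply: connect1; apply: hE1.
    by rewrite (take_small eq1 hs).
  - move=> a b c h1 h2 hs; have [c1 s1] := h1 hs; have [c2 s2] := h2 s1.
    by split => //; apply: connect_trans c1 c2.
  - by move=> ? hs; split => //; apply: connect0.
have stS : forall w, st t.+1 w = st t w ++ (if w \in C then [:: X] else [::]).
  by move=> w; rewrite /st e stack_rcons.
have [eqt hE] := IHt x' y' hk hb.
have cxy : connect (Kd d) x' y' := connect1 hk.
case: (leqP (size (st t x')) d) => hsz.
  have eyx := take_small eqt hsz.
  have [c1 _] := der2 x' y' cxy hb hsz.
  have hsz' : size (st t y') <= d by rewrite eyx.
  have [c2 _] := der2 y' x' hb cxy hsz'.
  have [nx ny] := pg_edge_node (Kd_pg hk).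
  have memeq : (x' \in C) = (y' \in C).
    move: hscc => /= [u0 _ eC]; rewrite eC !inE nx ny /=.
    apply/idP/idP => /andP [h1 h2]; apply/andP; split.
    - exact: connect_trans h1 c1.
    - exact: connect_trans c2 h2.
    - exact: connect_trans h1 c2.
    - exact: connect_trans c1 h2.
  split; first by rewrite !stS eyx memeq.
  move=> hs'; rewrite e E_rcons; apply/andP; split; first exact: hE hsz.
  apply/negP => /and3P [hx hy hd].
  move: hs'; rewrite stS hx => hs'.
  have hX : X \in take d (stack run x').
    rewrite -(cat_take_drop t.+1 run) stack_cat -/(st t.+1 x') stS hx take_cat.
    rewrite ltnNge hs' /= mem_cat mem_cat inE eqxx orbT //.
  move: hk => /andP [_ /allP /(_ X hX)].
  by rewrite hd.
have hsy : d < size (st t y').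
  rewrite ltnNge; apply/negP => hy.
  by move: hsz; rewrite (take_small (esym eqt) hy) ltnNge hy.
split; first by rewrite !stS !takel_cat.
by rewrite stS size_cat leqNgt (leq_trans hsz (leq_addr _ _)).
Qed.

End Sieve.

Lemma mod_form q l r : r < l -> (q * l + r) %% l = r.
Proof. by move=> h; rewrite modnMDl modn_small. Qed.

Lemma path_to_last (T : finType) (e : rel T) x p z :
  path e x p -> z \in x :: p -> connect e z (last x p).
Proof.
elim: p x => [|y p IH] x /=.
  by move=> _; rewrite inE => /eqP ->; apply: connect0.
case/andP => exy hp; rewrite inE => /orP [/eqP ->|hz].
  exact: connect_trans (connect1 exy) (path_connect hp (mem_last y p)).
exact: IH.
Qed.

Lemma arith1 m i k q l r r' : m <= i -> k = i - m -> k = q * l + r -> m + l <= i ->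
  r' < r -> r < l -> m + q * l + r' < i /\ i <= m + q * l + r' + (m + l).
Proof. move=> h1 h2 h3 h4 h5 h6; lia. Qed.

Lemma arith2 m i k q l r r' : m <= i -> k = i - m -> k = q * l + r -> m + l <= i ->
  q * l = q.-1 * l + l -> r < r' -> r' < l ->
  m + q.-1 * l + r' < i /\ i <= m + q.-1 * l + r' + (m + l).
Proof. move=> h1 h2 h3 h4 h5 h6 h7; lia. Qed.

Section LemmaB.
Variables (F V O : finType) (Q : QNP F V O) (pi : qpolicy F V O).
Variable run : seq ({set bstate F V} * V).
Local Notation bst := (bstate F V).
Hypothesis hrun : sieve_run Q pi run.
Hypothesis hsol : solves Q pi.
Local Notation E := (sieve_graph Q pi run).

Lemma E_node x y : connect E x y -> pg_node Q pi x -> pg_node Q pi y.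
Proof.
move=> h hx; apply: connect_trans hx _.
apply: (connect_sub (e := E)) h => u v /sieve_pg /andP [_ h].
exact: connect1.
Qed.

Lemma balance_loop b (C := fscc Q pi run b) :
  pg_node Q pi b -> (exists2 b2, b2 \in C & b2 != b) ->
  (forall u W, u \in C -> pi_decs Q pi u W -> exists2 u', u' \in C & pi_incs Q pi u' W) ->
  False.
Proof.
move=> nb [b2 hb2 nb2] hbal.
have inC : forall z, connect E b z -> connect E z b -> z \in C.
  by move=> z h1 h2; rewrite /C /fscc inE h1 h2 (E_node h1 nb).
have Cc : forall x y, x \in C -> y \in C -> connect E x y.
  move=> x y; rewrite /C /fscc !inE => /andP [/andP [_ h1] h2] /andP [/andP [_ h3] h4].
  exact: connect_trans h2 h3.
have [p [hp hl hsub]] : exists p, [/\ path E b p, last b p = b & {subset enum C <= b :: p}].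
  have bC : b \in C by apply: fscc_self.
  have : {subset enum C <= C} by move=> z; rewrite mem_enum.
  elim: (enum C) => [|t ts IH] hts.
    by exists [::]; split.
  have [|p [hp hl hsub]] := IH.
    by move=> z hz; apply: hts; rewrite inE hz orbT.
  have tC : t \in C by apply: hts; rewrite mem_head.
  move: (Cc _ _ bC tC) => /connectP [q1 hq1 e1].
  move: (Cc _ _ tC bC) => /connectP [q2 hq2 e2].
  exists (q1 ++ q2 ++ p); split.
  - by rewrite !cat_path hq1 -e1 hq2 -e2 /= hp.
  - by rewrite !last_cat -e1 -e2.
  - move=> z; rewrite inE => /orP [/eqP ->|hz].
      by rewrite e1 -cat_cons mem_cat mem_last.
    move: (hsub z hz); rewrite !inE !mem_cat => /orP [->//|->].
    by rewrite !orbT.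
set l := size p.
have lpos : 0 < l.
  rewrite /l; case E0: p => [|x p'] //; move: (hsub b2); rewrite mem_enum hb2 E0 inE => /(_ isT).
  by rewrite (negbTE nb2).
set lp := b :: p.
have lpC : forall r, nth b lp r \in C.
  move=> r; case: (ltnP r (size lp)) => hr; last by rewrite nth_default // fscc_self.
  have hz := mem_nth b hr.
  apply: inC; first exact: (path_connect hp hz).
  by rewrite -{2}hl; apply: path_to_last.
have lstep : forall r, E (nth b lp (r %% l)) (nth b lp (r.+1 %% l)).
  move=> r; have hr := ltn_pmod r lpos.
  have e1 : r.+1 %% l = (r %% l).+1 %% l.
    by rewrite {1}(divn_eq r l) -addnS modnMDl.
  have hE : E (nth b lp (r %% l)) (nth b p (r %% l)) by move/(pathP b): hp; apply.
  rewrite e1; case: (ltnP (r %% l).+1 l) => h.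
    by rewrite (modn_small h) /lp /=; move: hE; rewrite /lp.
  have el : (r %% l).+1 = l by apply/eqP; rewrite eqn_leq h hr.
  rewrite el modnn /lp /=; move: hE; rewrite /lp /=.
  suff -> : nth b p (r %% l) = b by [].
  have hsz : (size p).-1 = r %% l by change (l.-1 = r %% l); rewrite -{1}el.
  by rewrite -[RHS]hl -nth_last hsz.
move: (nb) => /connectP [pp hpp hbl].
have [h0 hs he] := path_bs hpp hbl.
set m := size pp in hs he.
pose bs i := if i <= m then nth b (initb Q :: pp) i else nth b lp ((i - m) %% l).
have bsE : forall k, m <= k -> bs k = nth b lp ((k - m) %% l).
  move=> k hk; rewrite /bs; case: (leqP k m) => // hkm.
  have -> : k = m by apply/eqP; rewrite eqn_leq hkm hk.
  by rewrite subnn mod0n he.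
have Epg : forall x y, E x y -> pg_step Q pi x y.
  by move=> x y /sieve_pg /andP [].
apply: (@not_solves_inf F V O Q pi bs (m + l)); last exact: hsol.
- by rewrite /bs leq0n.
- move=> k; case: (ltnP k m) => hk.
    by rewrite /bs ltnW // hk; apply: hs.
  rewrite bsE // bsE; last exact: leqW.
  by rewrite subSn //; apply: Epg; apply: lstep.
move=> i X hi; rewrite /stay_dec.
have hmi : m <= i by apply: leq_trans hi; apply: leq_addr.
rewrite (bsE _ hmi).
set k := i - m; set r := k %% l.
case ea: (pi (nth b lp r)) => [a|] // /andP [hd _].
have hdec : pi_decs Q pi (nth b lp r) X by rewrite /pi_decs ea.
have [u' hu' hinc] := hbal (nth b lp r) X (lpC r) hdec.
have [r' hr' er'] : exists2 r', r' < l & nth b lp r' = u'.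
  have : u' \in lp by apply: hsub; rewrite mem_enum.
  rewrite -index_mem => hix.
  case: (ltnP (index u' lp) l) => hl'.
    by exists (index u' lp) => //; rewrite nth_index // -index_mem.
  exists 0 => //.
  have el : index u' lp = l by apply/eqP; rewrite eqn_leq hl' andbT -ltnS.
  have := nth_index b (x := u') (s := lp); rewrite -index_mem => /(_ hix) <-.
  by rewrite el /lp -(prednK lpos) /= /l nth_last hl.
have hr : r < l by apply: ltn_pmod.
have nrr : r' != r.
  apply/negP => /eqP err; move: hinc; rewrite -er' err /pi_incs ea incE.
  by move: hd; rewrite decE; case: (neffs Q a X).
have hk := divn_eq k l; set q := k %/ l in hk; rewrite -/r in hk.
have hkl : l <= k by rewrite /k leq_subRL // -(leq_add2l m) addnC in hi *; apply: leq_trans hi _; rewrite addnC.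
have incj : forall j, m <= j -> (j - m) %% l = r' -> inc_step Q pi bs j X.
  by move=> j hj hjm; rewrite /inc_step (bsE _ hj) hjm er'.
case: (ltnP r' r) => hrr.
  have [a1 a2] := arith1 (k := k) hmi (erefl _) hk hi hrr hr.
  exists (m + q * l + r'); split => //.
  apply: incj; first by rewrite -addnA leq_addr.
  by rewrite -addnA addKn mod_form.
have hq : 0 < q.
  case E0: q hk => [|q'] // hk'; rewrite /= in hk'; move: hkl; rewrite hk'.
  by rewrite leqNgt hr.
have hq' : q * l = q.-1 * l + l by rewrite -{1}(prednK hq) mulSn addnC.
have hrr' : r < r' by rewrite ltn_neqAle eq_sym nrr hrr.
have [a1 a2] := arith2 (k := k) hmi (erefl _) hk hi hq' hrr' hr'.
exists (m + q.-1 * l + r'); split => //.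
apply: incj; first by rewrite -addnA leq_addr.
by rewrite -addnA addKn mod_form.
Qed.

Lemma lemmaB b a Z : pg_node Q pi b -> pi b = Some a -> decrements Q a Z ->
  exists2 X, X \in stack run b & decrements Q a X.
Proof.
move=> nb ea hdZ; apply: NNPP => hno.
have H : forall X, X \in stack run b -> ~~ decrements Q a X.
  by move=> X hX; apply/negP => hd; apply: hno; exists X.
set C := fscc Q pi run b.
have bC : b \in C by apply: fscc_self.
have Cc : forall x y, x \in C -> y \in C -> connect E x y.
  move=> x y; rewrite /C /fscc !inE => /andP [/andP [_ h1] h2] /andP [/andP [_ h3] h4].
  exact: connect_trans h2 h3.
have inC : forall z, connect E b z -> connect E z b -> z \in C.
  by move=> z h1 h2; rewrite /C /fscc inE h1 h2 (E_node h1 nb).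
have [b2 hb2 hinc2] : exists2 b2, b2 \in C & pi_incs Q pi b2 Z.
  apply: NNPP => h; apply: hrun.2; exists C, Z; split; first exact: fscc_scc.
  split; first by exists b => //; rewrite /pi_decs ea.
  split; first by move=> u hu; apply/negP => hi; apply: h; exists u.
  move=> [C' [hc hsub]]; move: (H Z (mem_stack hc (subsetP hsub b bC))).
  by rewrite hdZ.
have nb2 : b2 != b.
  apply/negP => /eqP e2; move: hinc2; rewrite e2 /pi_incs ea incE.
  by move: hdZ; rewrite decE; case: (neffs Q a Z).
have edge : forall u, u \in C -> exists2 v, v \in C & E u v.
  move=> u hu.
  have [w [hw wu]] : exists w, w \in C /\ w != u.
    case: (eqVneq b u) => hbu; first by exists b2; rewrite -hbu.
    by exists b.
  move: (Cc _ _ hu hw) => /connectP [[|v q] hq /= ew].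
    by move: wu; rewrite ew eqxx.
  move: hq => /= /andP [huv hq]; exists v => //.
  apply: inC.
    by apply: connect_trans (Cc _ _ bC hu) (connect1 huv).
  apply: connect_trans (path_to_last hq (mem_head _ _)) _.
  by rewrite -ew; apply: Cc.
apply: (balance_loop nb (ex_intro2 _ _ b2 hb2 nb2)) => u W hu hdW.
apply: NNPP => h; apply: hrun.2; exists C, W; split; first exact: fscc_scc.
split; first by exists u.
split; first by move=> v hv; apply/negP => hi; apply: h; exists v.
move=> [C' [hc hsub]]; have [v hv huv] := edge u hu.
by move: (removed hrun hc (subsetP hsub u hu) (subsetP hsub v hv) hdW); rewrite huv.
Qed.

End LemmaB.

Section Main.
Variables (F V O : finType) (Q : QNP F V O) (pi : qpolicy F V O).
Variables (idx : bstate F V -> nat) (run : seq ({set bstate F V} * V)).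
Local Notation bst := (bstate F V).
Hypothesis hidx : scc_indexing Q pi idx.
Hypothesis hrun : sieve_run Q pi run.
Hypothesis hsol : solves Q pi.

Definition NB := #|{: bst}|.
Local Notation K d := (Kd Q pi run d).
Definition RR d (b : bst) := #|[set v | connect (K d) b v]|.

Lemma Max_NB : Max F V = NB.+1.
Proof. by rewrite /Max /NB card_prod !card_ffun card_bool -expnD add1n. Qed.

Lemma idx_le b : pg_node Q pi b -> idx b <= NB.
Proof.
move: hidx => [k [h1 [h2 _]]] hb.
apply: leq_trans (proj2 (andP (h1 b hb))) _.
have : size (iota 1 k) <= size [seq idx x | x <- enum {: bst}].
  apply: uniq_leq_size; first exact: iota_uniq.
  move=> i; rewrite mem_iota => /andP [hi1 hi2].
  have hi : 0 < i <= k by rewrite hi1 /=; rewrite add1n ltnS in hi2.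
  have [x hx ex] := h2 i hi.
  by rewrite -ex; apply: map_f; rewrite mem_enum.
by rewrite size_iota size_map -cardT.
Qed.

Lemma K_pg_connect d x y : connect (K d) x y -> connect (pg_edge Q pi) x y.
Proof. by apply: connect_sub => u v h; apply: connect1; apply: Kd_pg h. Qed.

Lemma idx_eq b b' : pg_node Q pi b -> pg_node Q pi b' ->
  connect (pg_edge Q pi) b b' -> connect (pg_edge Q pi) b' b -> idx b = idx b'.
Proof.
move: hidx => [k [_ [_ [h3 _]]]] hb hb' c1 c2.
by apply/eqP; rewrite h3 // c1 c2.
Qed.

Lemma idx_mono b b' : pg_edge Q pi b b' -> idx b <= idx b'.
Proof.
move: hidx => [k [_ [_ [_ h4]]]] he; have [nb nb'] := pg_edge_node he.
case: (eqVneq (idx b) (idx b')) => [->//|hne].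
by apply: ltnW; apply: h4 => //; apply: connect1.
Qed.

Lemma RR_le d b : RR d b <= NB.
Proof. exact: max_card. Qed.

Lemma RR_sub d b b' : K d b b' -> RR d b' <= RR d b.
Proof.
move=> h; apply: subset_leq_card; apply/subsetP => v; rewrite !inE => hv.
exact: connect_trans (connect1 h) hv.
Qed.

Lemma RR_eq d b b' : K d b b' -> connect (K d) b' b -> RR d b' = RR d b.
Proof.
move=> h h'; apply/eqP; rewrite eqn_leq RR_sub //=.
apply: subset_leq_card; apply/subsetP => v; rewrite !inE => hv.
exact: connect_trans h' hv.
Qed.

Lemma RR_lt d b b' : K d b b' -> ~~ connect (K d) b' b -> RR d b' < RR d b.
Proof.
move=> h h'; apply: proper_card; apply/properP; split.
  apply/subsetP => v; rewrite !inE => hv.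
  exact: connect_trans (connect1 h) hv.
by exists b; rewrite !inE ?connect0.
Qed.

Definition Inv (s : tstate F V) : Prop :=
  [/\ pg_node Q pi (tb s), uniq (tal s),
   forall d, d < size (tal s) ->
     tc s d + RR d (tb s) <= NB \/
     [/\ tc s d + RR d (tb s) <= NB.+1,
         take d.+1 (tal s) = take d.+1 (stack run (tb s)) & idx (tb s) <= tcT s]
   & tc s (size (tal s)) + RR (size (tal s)) (tb s) <= NB].

Lemma act_inv s s' : Inv s -> tal s = stack run (tb s) -> idx (tb s) <= tcT s ->
  pg_edge Q pi (tb s) (tb s') -> tal s' = tal s -> tcT s' = tcT s ->
  (forall d, d <= size (tal s) -> tc s' d = 0 \/ (tc s' d = tc s d /\ K d (tb s) (tb s'))) ->
  Inv s'.
Proof.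
move=> [nb ua c1 c2] est hidxs he eal ecT hc.
have [_ nb'] := pg_edge_node he.
split => //; first by rewrite eal.
  move=> d; rewrite eal => hd.
  have [->|[-> hk]] := hc d (ltnW hd); first by left; rewrite add0n RR_le.
  case: (boolP (connect (K d) (tb s') (tb s))) => hback.
    rewrite (RR_eq hk hback); case: (c1 d hd) => [h|[h1 h2 h3]]; first by left.
    right; split => //.
      by rewrite h2; apply: (cycle_stack hrun) => //; apply: connect1.
    rewrite ecT -(idx_eq nb nb') //.
    - by apply: K_pg_connect; apply: connect1; exact: hk.
    - exact: K_pg_connect hback.
  left; have := RR_lt hk hback.
  by case: (c1 d hd) => [h|[h1 _ _]] hlt; lia.
rewrite eal; have [->|[-> hk]] := hc _ (leqnn _); first by rewrite add0n RR_le.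
by apply: leq_trans c2; rewrite leq_add2l; apply: RR_sub.
Qed.

Lemma push_inv s s' X rest : Inv s -> idx (tb s) <= tcT s ->
  tal s = take (size (tal s)) (stack run (tb s)) ->
  drop (size (tal s)) (stack run (tb s)) = X :: rest ->
  tb s' = tb s -> tcT s' = tcT s -> tal s' = rcons (tal s) X ->
  (forall i, tc s' i = if i == size (tal s) then (tc s (size (tal s))).+1
                       else if i == (size (tal s)).+1 then 0 else tc s i) ->
  Inv s'.
Proof.
move=> [nb ua c1 c2] hix hpre hdrop eb ecT eal hc.
have est : stack run (tb s) = tal s ++ X :: rest.
  by rewrite -{1}(cat_take_drop (size (tal s)) (stack run (tb s))) -hpre hdrop.
have hu := stack_uniq hrun (tb s); rewrite est cat_uniq /= in hu.
have hXal : X \notin tal s.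
  by move: hu => /and3P [_ hh _]; apply/negP => hX; move: hh; rewrite /= hX.
split; rewrite ?eb ?eal ?ecT //.
- by rewrite rcons_uniq hXal.
- move=> d; rewrite size_rcons ltnS leq_eqVlt => /orP [/eqP ->|hd].
    right; rewrite hc eqxx; split => //.
    rewrite take_oversize ?size_rcons // est take_cat ltnNge leqnSn /= subSnn /=.
    by rewrite take0 cats1.
  rewrite hc (ltn_eqF hd) (ltn_eqF (ltnW hd : d < (size (tal s)).+1)) //.
  have ht : take d.+1 (rcons (tal s) X) = take d.+1 (tal s).
    by rewrite -cats1 takel_cat.
  rewrite ht; exact: c1.
- rewrite size_rcons hc eqxx (gtn_eqF (ltnSn _)) add0n; exact: RR_le.
Qed.

Lemma pop_inv s s' X al' : Inv s -> tal s = rcons al' X ->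
  (tcT s < idx (tb s) \/ ~~ is_prefix (tal s) (stack run (tb s))) ->
  tb s' = tb s -> tcT s' = tcT s -> tal s' = al' -> (forall i, tc s' i = tc s i) ->
  Inv s'.
Proof.
move=> [nb ua c1 c2] eal hcond eb ecT eal' hc.
have ht : forall d, d < size al' -> take d.+1 (tal s) = take d.+1 al'.
  by move=> d hd; rewrite eal -cats1 takel_cat.
split; rewrite ?eb ?eal' ?ecT //.
- by move: ua; rewrite eal rcons_uniq => /andP [].
- move=> d hd; rewrite hc -ht //; apply: c1.
  by rewrite eal size_rcons; apply: leqW.
rewrite hc; have := c1 (size al'); rewrite eal size_rcons => /(_ (ltnSn _)).
case=> [//|[_ hp hi]].
exfalso; case: hcond => [|/negP]; first by rewrite ltnNge hi.
apply; rewrite /is_prefix eal size_rcons; apply/eqP.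
by rewrite -hp take_oversize // size_rcons.
Qed.

Lemma move_inv s s' : Inv s -> tal s = [::] -> tb s' = tb s -> tal s' = [::] ->
  (forall i, tc s' i = tc s i) -> Inv s'.
Proof.
move=> [nb ua c1 c2] eal eb eal' hc.
split; rewrite ?eb ?eal' //.
by rewrite hc; move: c2; rewrite eal.
Qed.

Lemma prefix_full (al st : seq V) : is_prefix al st -> drop (size al) st = [::] -> al = st.
Proof.
move=> /eqP hp hd; by rewrite -[st](cat_take_drop (size al)) hd cats0 -hp.
Qed.

Lemma filter_first (P : pred V) (al : seq V) X r :
  [seq Z <- al | P Z] = X :: r -> forall d Z, d <= index X al -> Z \in take d al -> ~~ P Z.
Proof.
elim: al => [|y al IH] //=; case: ifP => hy.
  by case=> <- _ d Z; rewrite eqxx leqn0 => /eqP ->.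
move=> hf d Z; have hX : X != y.
  apply/negP => /eqP e; have : X \in [seq Z <- al | P Z] by rewrite hf mem_head.
  by rewrite mem_filter e hy.
rewrite eq_sym in hX; rewrite (negbTE hX); case: d => [|d] //= hd; rewrite inE => /orP [/eqP ->|hZ].
  by rewrite hy.
exact: IH hf d Z hd hZ.
Qed.

Lemma size_le_nvars (al : seq V) : uniq al -> size al <= nvars V.
Proof.
move=> hu; rewrite /nvars cardE; apply: uniq_leq_size => // x _.
by rewrite mem_enum.
Qed.

Lemma pop_shape (al : seq V) X r : rev al = X :: r ->
  al = rcons (rev r) X /\ take (size al).-1 al = rev r.
Proof.
move=> e; have e' : al = rcons (rev r) X by rewrite -[al]revK e rev_cons.
split => //; rewrite e' size_rcons /= -cats1 take_size_cat //.
Qed.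

Lemma step_inv s s' : Inv s ->
  pstep (t_goal Q) (t_app Q) (t_succ Q) (pistar Q pi idx run) s s' -> Inv s'.
Proof.
move=> hI [hng [act [hp [happ hsucc]]]]; have hI' := hI.
move: hI' => [nb ua c1 c2].
move: hp; rewrite /pistar.
case h1: (tcT s < idx (tb s)).
  case E: (rev (tal s)) => [|X r] [eact]; subst act.
    have e0 : tal s = [::] by apply/nilP; rewrite /nilp -size_rev E.
    case: hsucc => eb _ eal hc; apply: (move_inv hI e0 eb) => //; by rewrite eal.
  have [e1 e2] := pop_shape E.
  case: hsucc => eb ecT eal hc.
  by apply: (pop_inv hI e1 _ eb ecT) => //; [left|rewrite eal].
case h2: (~~ is_prefix (tal s) (stack run (tb s))).
  case E: (rev (tal s)) => [|X r] // [eact]; subst act.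
  have [e1 e2] := pop_shape E.
  case: hsucc => eb ecT eal hc.
  by apply: (pop_inv hI e1 _ eb ecT) => //; [right; rewrite h2|rewrite eal].
move/negbFE: h2 => h2; move/negbT: h1; rewrite -leqNgt => h1.
case E: (drop (size (tal s)) (stack run (tb s))) => [|X rest]; last first.
  case=> eact; subst act; case: hsucc => eb ecT eal hc.
  by apply: (push_inv hI h1 (eqP h2) E eb ecT eal).
have est := prefix_full h2 E.
case E2: (pi (tb s)) => [a|] //.
have hpg : forall b', td_succ Q a (tb s) b' -> applicable Q a (tb s) ->
    pg_edge Q pi (tb s) b'.
  move=> b' td ap; rewrite /pg_edge nb /pg_step E2 ap td !andbT /=; apply/negP; exact: hng.
case: ifP => h3.
  case=> eact; subst act; case: hsucc => td ecT eal hc.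
  case: happ => _ ap _.
  apply: (act_inv hI est h1 (hpg _ td ap) eal ecT) => d hd.
  right; split => //; rewrite /Kd hpg //=.
  apply/allP => Z _; rewrite /pi_decs E2.
  by move/forallP: h3 => /(_ Z).
case E3: [seq Z <- tal s | decrements Q a Z] => [|X r] //.
case=> eact; subst act; case: hsucc => td ecT eal hc.
case: happ => _ _ ap _ _.
apply: (act_inv hI est h1 (hpg _ td ap) eal ecT) => d hd.
rewrite hc; case: (leqP (index X (tal s)).+1 d) => hdi.
  by left; rewrite (leq_trans hd (size_le_nvars ua)).
right; split => //; rewrite /Kd hpg //=.
apply/allP => Z hZ; rewrite /pi_decs E2.
by apply: (filter_first E3 (d := d)) => //; rewrite est.
Qed.

Local Notation pst := (pstep (t_goal Q) (t_app Q) (t_succ Q) (pistar Q pi idx run)).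

Lemma pop_pstep s X r : Inv s -> ~~ is_goal Q (tb s) -> rev (tal s) = X :: r ->
  (tcT s < idx (tb s) \/ ~~ is_prefix (tal s) (stack run (tb s))) ->
  pst s (Build_tstate (tb s) (tc s) (tcT s) (rev r)).
Proof.
move=> [nb ua c1 c2] hg E hc; have [e1 e2] := pop_shape E.
split; first by apply/negP.
exists (Pop O X (size (tal s))); split.
  rewrite /pistar; case: ifP => h; first by rewrite E.
  by case: hc => [hh|->]; [rewrite hh in h|rewrite /= E].
split; last by split.
split.
- by move: (size_le_nvars ua); rewrite e1 size_rcons.
- by rewrite e1 mem_rcons mem_head.
- by rewrite /at_pos e1 size_rcons /= nth_rcons ltnn eqxx leqnn eqxx.
- by [].
Qed.

Lemma move_pstep s : Inv s -> ~~ is_goal Q (tb s) -> tal s = [::] ->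
  tcT s < idx (tb s) -> pst s (Build_tstate (tb s) (tc s) (tcT s).+1 (tal s)).
Proof.
move=> [nb ua c1 c2] hg e0 h; split; first by apply/negP.
exists (Move V O); split.
  by rewrite /pistar h e0.
split; last by split.
split; first by rewrite e0.
by rewrite Max_NB ltnS; apply: leq_trans (ltnW h) (idx_le nb).
Qed.

Lemma push_facts s X rest : is_prefix (tal s) (stack run (tb s)) ->
  drop (size (tal s)) (stack run (tb s)) = X :: rest ->
  stack run (tb s) = tal s ++ X :: rest /\ X \notin tal s.
Proof.
move=> /eqP hpre hdrop.
have est : stack run (tb s) = tal s ++ X :: rest.
  by rewrite -{1}(cat_take_drop (size (tal s)) (stack run (tb s))) -hpre hdrop.
split => //; have hu := stack_uniq hrun (tb s); rewrite est cat_uniq /= in hu.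
by move: hu => /and3P [_ hh _]; apply/negP => hX; move: hh; rewrite /= hX.
Qed.

Lemma push_pstep s X rest : Inv s -> ~~ is_goal Q (tb s) -> idx (tb s) <= tcT s ->
  is_prefix (tal s) (stack run (tb s)) ->
  drop (size (tal s)) (stack run (tb s)) = X :: rest ->
  pst s (Build_tstate (tb s)
     (fun i => if i == size (tal s) then (tc s (size (tal s))).+1
               else if i == (size (tal s)).+1 then 0 else tc s i)
     (tcT s) (rcons (tal s) X)).
Proof.
move=> [nb ua c1 c2] hg hix hpre E; have [est hX] := push_facts hpre E.
split; first by apply/negP.
exists (Push O X (size (tal s))); split.
  by rewrite /pistar ltnNge hix /= hpre /= E.
split; last by split.
split => //.
- apply: leq_trans (size_le_nvars (stack_uniq hrun (tb s))).
  by rewrite est size_cat /= addnS ltnS leq_addr.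
- by rewrite Max_NB ltnS; apply: leq_trans c2; apply: leq_addr.
Qed.

Lemma ready_pistar s a : idx (tb s) <= tcT s -> tal s = stack run (tb s) ->
  pi (tb s) = Some a ->
  pistar Q pi idx run s = if [forall Z, ~~ decrements Q a Z] then Some (Act V a)
     else if [seq Z <- tal s | decrements Q a Z] is X :: _
          then Some (ActD a X (index X (tal s)).+1) else None.
Proof.
move=> hix est ea.
rewrite /pistar ltnNge hix /= -est /is_prefix take_size eqxx /= drop_size ea //.
Qed.

Lemma no_inc_ready s a : tal s = stack run (tb s) -> pi (tb s) = Some a ->
  no_inc_in_stack Q a (tal s).
Proof.
move=> est ea; apply/forallP => Y; apply/implyP => hi; rewrite est.
by apply: (inc_not_stack hrun); rewrite /pi_incs ea.
Qed.

Lemma act_pstep s a b' : Inv s -> ~~ is_goal Q (tb s) -> idx (tb s) <= tcT s ->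
  tal s = stack run (tb s) -> pi (tb s) = Some a -> applicable Q a (tb s) ->
  td_succ Q a (tb s) b' -> [forall Z, ~~ decrements Q a Z] ->
  pst s (Build_tstate b' (tc s) (tcT s) (tal s)).
Proof.
move=> hI hg hix est ea ap td h3; split; first by apply/negP.
exists (Act V a); split; first by rewrite (ready_pistar hix est ea) h3.
split; last by split.
split => //; first by move=> Z; move/forallP: h3; apply.
exact: no_inc_ready.
Qed.

Lemma actd_pstep s a b' X r : Inv s -> ~~ is_goal Q (tb s) -> idx (tb s) <= tcT s ->
  tal s = stack run (tb s) -> pi (tb s) = Some a -> applicable Q a (tb s) ->
  td_succ Q a (tb s) b' -> ~~ [forall Z, ~~ decrements Q a Z] ->
  [seq Z <- tal s | decrements Q a Z] = X :: r ->
  pst s (Build_tstate b'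
    (fun i => if (index X (tal s)).+1 <= i <= nvars V then 0 else tc s i)
    (tcT s) (tal s)).
Proof.
move=> [nb ua c1 c2] hg hix est ea ap td h3 E3; split; first by apply/negP.
exists (ActD a X (index X (tal s)).+1); split.
  by rewrite (ready_pistar hix est ea) (negbTE h3) E3.
have : X \in [seq Z <- tal s | decrements Q a Z] by rewrite E3 mem_head.
rewrite mem_filter => /andP [hd hX].
split; last by split.
split => //.
- apply: leq_trans (size_le_nvars ua); by rewrite index_mem.
- exact: no_inc_ready.
- by rewrite /at_pos /= index_mem hX (nth_index X hX) eqxx.
Qed.

Local Notation prc := (preach (t_goal Q) (t_app Q) (t_succ Q) (pistar Q pi idx run)).

Lemma prc_step s s1 s' : pst s s1 -> prc s1 s' -> prc s s'.
Proof. by move=> h1 h2; apply: rt_trans h2; apply: rt_step. Qed.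

Lemma popall n : forall s, size (tal s) = n -> Inv s -> ~~ is_goal Q (tb s) ->
  tcT s < idx (tb s) -> exists s', [/\ prc s s', Inv s', tb s' = tb s,
     tcT s' = tcT s & tal s' = [::]].
Proof.
elim: n => [|n IH] s hn hI hg h.
  by exists s; split => //; [apply: rt_refl|apply: size0nil].
case E: (rev (tal s)) => [|X r].
  by move: hn; rewrite -size_rev E.
have hst := pop_pstep hI hg E (or_introl h).
have hI1 := step_inv hI hst.
have [e1 _] := pop_shape E.
have [|s' [h1 h2 h3 h4 h5]] := IH _ _ hI1 hg h.
  by move: hn; rewrite e1 size_rcons => /eq_add_S.
by exists s'; split => //; apply: prc_step hst h1.
Qed.

Lemma moves n : forall s, idx (tb s) - tcT s = n -> tal s = [::] -> Inv s ->
  ~~ is_goal Q (tb s) -> exists s', [/\ prc s s', Inv s', tb s' = tb s,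
     idx (tb s) <= tcT s' & tal s' = [::]].
Proof.
elim: n => [|n IH] s hn e0 hI hg.
  by exists s; split => //; [apply: rt_refl|rewrite -subn_eq0 hn].
have h : tcT s < idx (tb s) by rewrite -subn_gt0 hn.
have hst := move_pstep hI hg e0 h.
have hI1 := step_inv hI hst.
have hn1 : idx (tb s) - (tcT s).+1 = n by rewrite subnS hn.
have [s' [h1 h2 h3 h4 h5]] :=
  IH (Build_tstate (tb s) (tc s) (tcT s).+1 (tal s)) hn1 e0 hI1 hg.
by exists s'; split => //; apply: prc_step hst h1.
Qed.

Lemma popnp n : forall s, size (tal s) = n -> Inv s -> ~~ is_goal Q (tb s) ->
  idx (tb s) <= tcT s -> exists s', [/\ prc s s', Inv s', tb s' = tb s,
     idx (tb s) <= tcT s' & is_prefix (tal s') (stack run (tb s))].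
Proof.
elim: n => [|n IH] s hn hI hg h.
  exists s; split => //; first exact: rt_refl.
  by rewrite (size0nil hn) /is_prefix take0.
case hp: (is_prefix (tal s) (stack run (tb s))).
  by exists s; split => //; apply: rt_refl.
case E: (rev (tal s)) => [|X r].
  by move: hn; rewrite -size_rev E.
have hst := pop_pstep hI hg E (or_intror (negbT hp)).
have hI1 := step_inv hI hst.
have [e1 _] := pop_shape E.
have [|s' [h1 h2 h3 h4 h5]] := IH _ _ hI1 hg h.
  by move: hn; rewrite e1 size_rcons => /eq_add_S.
by exists s'; split => //; apply: prc_step hst h1.
Qed.

Lemma pushes n : forall s, size (stack run (tb s)) - size (tal s) = n -> Inv s ->
  ~~ is_goal Q (tb s) -> idx (tb s) <= tcT s -> is_prefix (tal s) (stack run (tb s)) ->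
  exists s', [/\ prc s s', Inv s', tb s' = tb s,
     idx (tb s) <= tcT s' & tal s' = stack run (tb s')].
Proof.
elim: n => [|n IH] s hn hI hg h hp.
  exists s; split => //; first exact: rt_refl.
  by apply: prefix_full => //; apply: drop_oversize; rewrite -subn_eq0 hn.
case E: (drop (size (tal s)) (stack run (tb s))) => [|X rest].
  by move: hn; rewrite -size_drop E.
have hst := push_pstep hI hg h hp E.
have hI1 := step_inv hI hst.
have [est _] := push_facts hp E.
have hn1 : size (stack run (tb s)) - size (rcons (tal s) X) = n.
  by rewrite size_rcons subnS hn.
have hp1 : is_prefix (rcons (tal s) X) (stack run (tb s)).
  rewrite /is_prefix size_rcons est take_cat ltnNge leqnSn /= subSnn /= take0.
  by rewrite cats1.
have [s' [h1 h2 h3 h4 h5]] := IH (Build_tstate (tb s)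
     (fun i => if i == size (tal s) then (tc s (size (tal s))).+1
               else if i == (size (tal s)).+1 then 0 else tc s i)
     (tcT s) (rcons (tal s) X)) hn1 hI1 hg h hp1.
by exists s'; split => //; apply: prc_step hst h1.
Qed.

Lemma phase s : Inv s -> ~~ is_goal Q (tb s) ->
  exists s', [/\ prc s s', Inv s', tb s' = tb s,
     idx (tb s) <= tcT s' & tal s' = stack run (tb s')].
Proof.
move=> hI hg.
have [s2 [p2 i2 b2 h2 hp2]] : exists s2, [/\ prc s s2, Inv s2, tb s2 = tb s,
     idx (tb s) <= tcT s2 & is_prefix (tal s2) (stack run (tb s))].
  case: (ltnP (tcT s) (idx (tb s))) => h.
    have [s1 [p1 i1 b1 c1 e1]] := popall (erefl _) hI hg h.
    have hg1 : ~~ is_goal Q (tb s1) by rewrite b1.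
    have [s2 [p2 i2 b2 h2 e2]] := moves (erefl _) e1 i1 hg1.
    exists s2; split => //; first exact: rt_trans p1 p2.
    - by rewrite b2.
    - by rewrite -b1.
    - by rewrite e2 /is_prefix take0.
  exact: (popnp (erefl _) hI hg h).
have hg2 : ~~ is_goal Q (tb s2) by rewrite b2.
have hi2 : idx (tb s2) <= tcT s2 by rewrite b2.
have hpp2 : is_prefix (tal s2) (stack run (tb s2)) by rewrite b2.
have [s3 [p3 i3 b3 h3 e3]] := pushes (erefl _) i2 hg2 hi2 hpp2.
exists s3; split => //; first exact: rt_trans p2 p3.
- by rewrite b3 b2.
- by rewrite -b2.
Qed.

Lemma to_goal p : forall b s, path (pg_step Q pi) b p -> is_goal Q (last b p) ->
  tb s = b -> Inv s -> exists g, prc s g /\ t_goal Q g.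
Proof.
elim: p => [|b' p IH] b s /=.
  by move=> _ hg eb _; exists s; split; [apply: rt_refl|rewrite /t_goal eb].
case/andP => hbb' hp hgl eb hI.
case: (boolP (is_goal Q b)) => hg.
  by exists s; split; [apply: rt_refl|rewrite /t_goal eb].
rewrite -eb in hg.
have [s1 [p1 i1 b1 h1 e1]] := phase hI hg.
have [_ [a [ea ap td]]] := pg_stepP hbb'.
rewrite -eb -b1 in ea ap td.
have hg1 : ~~ is_goal Q (tb s1) by rewrite b1.
have h1' : idx (tb s1) <= tcT s1 by rewrite b1.
case: (boolP [forall Z, ~~ decrements Q a Z]) => h3.
  have hst := act_pstep i1 hg1 h1' e1 ea ap td h3.
  have hI2 := step_inv i1 hst.
  have [g [pg gg]] := IH b' (Build_tstate b' (tc s1) (tcT s1) (tal s1)) hp hgl (erefl b') hI2.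
  by exists g; split => //; apply: rt_trans p1 (prc_step hst pg).
have [Z hZ] : exists Z, decrements Q a Z.
  move: h3; rewrite negb_forall => /existsP [Z]; rewrite negbK => hZ.
  by exists Z.
have [i1' _ _ _] := i1.
have [X hXs hX] := lemmaB hrun hsol i1' ea hZ.
case E3: [seq Z <- tal s1 | decrements Q a Z] => [|X0 r].
  have : X \in [seq Z <- tal s1 | decrements Q a Z] by rewrite mem_filter hX e1.
  by rewrite E3.
have hst := actd_pstep i1 hg1 h1' e1 ea ap td h3 E3.
have hI2 := step_inv i1 hst.
have [g [pg gg]] := IH b' (Build_tstate b'
    (fun i => if (index X0 (tal s1)).+1 <= i <= nvars V then 0 else tc s1 i)
    (tcT s1) (tal s1)) hp hgl (erefl b') hI2.
by exists g; split => //; apply: rt_trans p1 (prc_step hst pg).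
Qed.

Lemma Inv_init : Inv (t_init Q).
Proof.
split => //=; first exact: connect0.
by rewrite add0n; apply: RR_le.
Qed.

Lemma Inv_reach s : prc (t_init Q) s -> Inv s.
Proof.
have gen : forall x y, prc x y -> Inv x -> Inv y.
  move=> x y; elim=> [u v h|u|u v w _ IH1 _ IH2] hI //.
  - exact: step_inv hI h.
  - exact: IH2 (IH1 hI).
by move=> h; apply: gen h Inv_init.
Qed.

Theorem main_sc : strong_cyclic (t_init Q) (@t_goal F V O Q) (@t_app F V O Q)
                (@t_succ F V O Q) (pistar Q pi idx run).
Proof.
move=> s hs; have hI := Inv_reach hs.
have [nb _ _ _] := hI.
have [g [hcg hg]] := A2 hsol nb.
move/connectP: hcg => [p hp eg].
by apply: (to_goal hp) => //; rewrite -eg.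
Qed.

End Main.

Theorem theorem15 (F V O : finType) (Q : QNP F V O) (pi : qpolicy F V O)
    (idx : bstate F V -> nat) (run : seq ({set bstate F V} * V)) :
  scc_indexing Q pi idx ->
  sieve_run Q pi run ->
  solves Q pi ->
  strong_cyclic (t_init Q) (@t_goal F V O Q) (@t_app F V O Q)
                (@t_succ F V O Q) (pistar Q pi idx run).
Proof.
move=> hidx hrun hsol; exact: main_sc.
Qed.
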